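(* Let $q\in[1,\infty]$, $(d_M)_{M\in\mathbb N}\in\mathbb N^{\mathbb N}$, $(r_M)_{M\in\mathbb N}$ reals with $r_M\ge1$, and let $\Sigma_M=B_{d_M,\|\cdot\|_q}(0,r_M)$ be the set of sequences in $\ell^q(\mathbb N)$ of $\ell^q$-norm at most $r_M$ with all coordinates beyond the first $d_M$ equal to zero. Then $\Sigma=(\Sigma_M)_M$ is either $\infty$-encodable in $\ell^q(\mathbb N)$ or $\gamma$-encodable in $\ell^q(\mathbb N)$ for no $\gamma>0$. Moreover, $\Sigma$ is $\infty$-encodable if and only if $d_M(\log_2(r_M)+1)=O(M^{1+h})$ as $M\to\infty$ for every $h>0$.
   Context: A finite $X\subset A$ is an $\varepsilon$-covering of $A$ (in a metric space) if every point of $A$ is within distance $\varepsilon$ of some point of $X$. For $\gamma,h>0$, a $(\gamma,h)$-encoding of $\Sigma=(\Sigma_M)_M$ is a sequence $(\Sigma(\gamma,h)_M)_M$ such that for some $c_1,c_2>0$ and all $M$, $\Sigma(\gamma,h)_M$ is a $c_1M^{-\gamma}$-covering of $\Sigma_M$ with $\log_2|\Sigma(\gamma,h)_M|\le c_2M^{1+h}$. $\Sigma$ is $\gamma$-encodable if it admits a $(\gamma,h)$-encoding for every $h>0$, and $\infty$-encodable if it is $\gamma$-encodable for every $\gamma>0$. *)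

(* Defs.v *)
From HB Require Import structures.
From mathcomp Require Import all_boot all_order all_algebra.
From mathcomp Require Import finmap.
From mathcomp Require Import all_classical all_reals all_analysis.
Set Implicit Arguments. Unset Strict Implicit. Unset Printing Implicit Defensive.
Import Order.TTheory GRing.Theory Num.Theory.
Local Open Scope classical_set_scope.
Local Open Scope ring_scope.

(* Real sequences nat -> R; the l^q norm, q in [1, +oo], valued in \bar R
   (+oo exactly for sequences outside l^q). *)
Definition lq_norm (R : realType) (q : \bar R) (x : nat -> R) : \bar R :=
  match q with
  | EFin p => ereal_sup (range (fun N : nat =>
                 ((\sum_(i < N) `|x i| `^ p) `^ p^-1)%:E))
  | _ => ereal_sup (range (fun i : nat => (`|x i|)%:E))
  end.

Definition lq_dist (R : realType) (q : \bar R) (x y : nat -> R) : \bar R :=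
  lq_norm q (x - y).

Definition ball_fin (R : realType) (q : \bar R) (d : nat) (r : R) : set (nat -> R) :=
  [set x | (lq_norm q x <= r%:E)%E /\ forall i, (d <= i)%N -> x i = 0].

Definition covering (R : realType) (q : \bar R) (A X : set (nat -> R)) (eps : R) :=
  [/\ finite_set X, X `<=` A &
      forall a, A a -> exists2 x, X x & (lq_dist q a x <= eps%:E)%E].

Definition log2 (R : realType) (x : R) : R := ln x / ln 2.

Definition encodable_gh (R : realType) (q : \bar R) (Sigma : nat -> set (nat -> R))
  (gamma h : R) : Prop :=
  exists (c1 c2 : R), 0 < c1 /\ 0 < c2 /\
  exists Enc : nat -> set (nat -> R), forall M : nat, (1 <= M)%N ->
    covering q (Sigma M) (Enc M) (c1 * M%:R `^ (- gamma)) /\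
    log2 (#|` fset_set (Enc M)|%fset)%:R <= c2 * M%:R `^ (1 + h).

Definition gamma_encodable (R : realType) (q : \bar R) (Sigma : nat -> set (nat -> R))
  (gamma : R) : Prop :=
  forall h : R, 0 < h -> encodable_gh q Sigma gamma h.

Definition infty_encodable (R : realType) (q : \bar R) (Sigma : nat -> set (nat -> R)) : Prop :=
  forall gamma : R, 0 < gamma -> gamma_encodable q Sigma gamma.

(* Main.v *)
Require Import Defs.
From HB Require Import structures.
From mathcomp Require Import all_boot all_order all_algebra.
From mathcomp Require Import finmap.
From mathcomp Require Import all_classical all_reals all_analysis.
From mathcomp Require Import ring lra zify.
Import Order.TTheory GRing.Theory Num.Theory.
Local Open Scope ring_scope.

Module Aux.
Set Implicit Arguments. Unset Strict Implicit.

Section Nrm.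
Variable R : realType.
Implicit Types (x y z : nat -> R).

Definition psum (p : R) (d : nat) x := \sum_(i < d) `|x i| `^ p.
Definition nrm (q : \bar R) (d : nat) x : R :=
  match q with
  | EFin p => psum p d x `^ p^-1
  | _ => \big[Num.max/0]_(i < d) `|x i|
  end.

Lemma powR_le (r a b : R) : 0 <= r -> 0 <= a -> a <= b -> a `^ r <= b `^ r.
Proof.
move=> hr ha hab; apply: (ge0_ler_powR hr); rewrite ?nnegrE //.
exact: le_trans hab.
Qed.

Lemma rootK (p a : R) : 1 <= p -> 0 <= a -> (a `^ p^-1) `^ p = a.
Proof.
move=> hp ha; rewrite -powRrM mulVf ?powRr1 //.
by apply/eqP => h; rewrite h in hp; move: hp; rewrite ler10.
Qed.

Lemma powK (p a : R) : 1 <= p -> 0 <= a -> (a `^ p) `^ p^-1 = a.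
Proof.
move=> hp ha; rewrite -powRrM mulfV ?powRr1 //.
by apply/eqP => h; rewrite h in hp; move: hp; rewrite ler10.
Qed.

Lemma psum_ge0 p d x : 0 <= psum p d x.
Proof. by apply: sumr_ge0 => i _; exact: powR_ge0. Qed.

Lemma root_le (p a t : R) : 1 <= p -> 0 <= a -> 0 <= t ->
  (a `^ p^-1 <= t) = (a <= t `^ p).
Proof.
move=> hp ha ht; have hp0 : 0 <= p by apply: le_trans hp.
have hpi : 0 <= p^-1 by rewrite invr_ge0.
apply/idP/idP => h.
  by rewrite -(rootK hp ha); apply: powR_le => //; exact: powR_ge0.
by rewrite -(powK hp ht); apply: powR_le.
Qed.

Lemma nrm_ge0 q d x : 0 <= nrm q d x.
Proof.
case: q => [p| |] /=; first exact: powR_ge0.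
- apply: (big_ind (fun v => 0 <= v)) => // a b ha hb.
  by rewrite le_max ha.
- apply: (big_ind (fun v => 0 <= v)) => // a b ha hb.
  by rewrite le_max ha.
Qed.

Lemma ge1q (q : \bar R) : (1%:E <= q)%E ->
  (exists2 p, 1 <= p & q = p%:E) \/ q = +oo%E.
Proof.
case: q => [p| |] //=; last by right.
by rewrite lee_fin => h; left; exists p.
Qed.

Lemma le1oo : (1%:E <= +oo%E :> \bar R)%E.
Proof. by rewrite leey. Qed.

Lemma nrm_coord q d x i : (1%:E <= q)%E -> (i < d)%N -> `|x i| <= nrm q d x.
Proof.
move=> hq hi; case: (ge1q hq) => [[p hp ->]|->] /=.
  have hp0 : 0 <= p by apply: le_trans hp.
  rewrite -(powK hp (normr_ge0 (x i))); apply: powR_le.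
  - by rewrite invr_ge0.
  - exact: powR_ge0.
  rewrite /psum (bigD1 (Ordinal hi)) //= lerDl.
  by apply: sumr_ge0 => j _; exact: powR_ge0.
exact: (le_bigmax 0 (fun j : 'I_d => `|x j|) (Ordinal hi)).
Qed.

Lemma nrm_le_inf d x t : 0 <= t -> (forall i, (i < d)%N -> `|x i| <= t) ->
  nrm +oo%E d x <= t.
Proof.
move=> ht h /=; apply: bigmax_le => // i _; exact: h.
Qed.

Lemma nrm_le_p p d x t : 1 <= p -> 0 <= t -> psum p d x <= t `^ p ->
  nrm p%:E d x <= t.
Proof. by move=> hp ht h /=; rewrite root_le // psum_ge0. Qed.

Lemma psum_le p d x t : 1 <= p -> 0 <= t -> nrm p%:E d x <= t ->
  psum p d x <= t `^ p.
Proof. by move=> hp ht /=; rewrite root_le // psum_ge0. Qed.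

Lemma nrm_mono q d x y : (1%:E <= q)%E ->
  (forall i, (i < d)%N -> `|x i| <= `|y i|) -> nrm q d x <= nrm q d y.
Proof.
move=> hq h; case: (ge1q hq) => [[p hp ->]|->].
  have hp0 : 0 <= p by apply: le_trans hp.
  apply: nrm_le_p => //; first exact: nrm_ge0.
  rewrite /= rootK //; last exact: psum_ge0.
  apply: ler_sum => i _; apply: powR_le => //; exact: h.
apply: nrm_le_inf; first exact: nrm_ge0.
move=> i hi; apply: le_trans (h i hi) _; exact: (nrm_coord y le1oo hi).
Qed.

Lemma nrm_box q d x (del : R) : (1%:E <= q)%E -> 0 <= del ->
  (forall i, (i < d)%N -> `|x i| <= del) -> nrm q d x <= d%:R * del.
Proof.
move=> hq hd h; case: (ge1q hq) => [[p hp ->]|->].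
  have hp0 : 0 <= p by apply: le_trans hp.
  apply: nrm_le_p => //; first by rewrite mulr_ge0.
  apply: (@le_trans _ _ (\sum_(i < d) del `^ p)).
    apply: ler_sum => i _; apply: powR_le => //; exact: h.
  rewrite sumr_const card_ord powRM // -[del `^ p *+ d]mulr_natl.
  apply: ler_wpM2r; first exact: powR_ge0.
  case: d {h} => [|d]; first exact: powR_ge0.
  by apply: le1r_powR => //; rewrite ler1n.
apply: nrm_le_inf; first by rewrite mulr_ge0.
move=> i hi; apply: le_trans (h i hi) _.
rewrite -{1}(mul1r del); apply: ler_wpM2r => //.
by rewrite ler1n; case: d hi h.
Qed.

Lemma nrm_hom q d x y (c : R) : (1%:E <= q)%E -> 0 <= c ->
  (forall i, (i < d)%N -> `|y i| <= c * `|x i|) -> nrm q d y <= c * nrm q d x.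
Proof.
move=> hq hc h; case: (ge1q hq) => [[p hp ->]|->].
  have hp0 : 0 <= p by apply: le_trans hp.
  apply: nrm_le_p => //; first by rewrite mulr_ge0 // nrm_ge0.
  rewrite powRM //; last exact: nrm_ge0.
  rewrite /= rootK //; last exact: psum_ge0.
  rewrite /psum mulr_sumr; apply: ler_sum => i _.
  rewrite -powRM //; apply: powR_le => //; exact: h.
apply: nrm_le_inf; first by rewrite mulr_ge0 // nrm_ge0.
move=> i hi; apply: le_trans (h i hi) _.
by apply: ler_wpM2l => //; apply: (nrm_coord x le1oo hi).
Qed.

Lemma powD_le (p a b : R) : 1 <= p -> 0 <= a -> 0 <= b ->
  (a + b) `^ p <= 2 `^ p * (a `^ p + b `^ p).
Proof.
move=> hp ha hb; have hp0 : 0 <= p by apply: le_trans hp.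
wlog hab : a b ha hb / a <= b.
  move=> W; case: (leP a b) => h; first exact: W.
  by rewrite addrC [a `^ p + _]addrC; apply: W => //; exact: ltW.
apply: (@le_trans _ _ ((2 * b) `^ p)).
  apply: powR_le => //; first exact: addr_ge0.
  by rewrite mulr2n mulrDl mul1r lerD2r.
rewrite powRM //; apply: ler_wpM2l; first exact: powR_ge0.
by rewrite lerDr powR_ge0.
Qed.

Lemma nrm_tri q d x y z : (1%:E <= q)%E ->
  (forall i, (i < d)%N -> `|z i| <= `|x i| + `|y i|) ->
  nrm q d z <= 4 * Num.max (nrm q d x) (nrm q d y).
Proof.
move=> hq h; set m := Num.max _ _.
have hm0 : 0 <= m by rewrite le_max nrm_ge0.
have hxm : nrm q d x <= m by rewrite le_max lexx.
have hym : nrm q d y <= m by rewrite le_max lexx orbT.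
case: (ge1q hq) => [[p hp eq]|eq]; rewrite eq in hxm hym *.
  have hp0 : 0 <= p by apply: le_trans hp.
  apply: nrm_le_p => //; first by rewrite mulr_ge0.
  apply: (@le_trans _ _ (2 `^ p * (psum p d x + psum p d y))).
    rewrite /psum -big_split /= mulr_sumr; apply: ler_sum => i _.
    apply: le_trans (powD_le hp (normr_ge0 _) (normr_ge0 _)).
    apply: powR_le => //; exact: h.
  have := psum_le hp hm0 hxm; have := psum_le hp hm0 hym => h1 h2.
  apply: (@le_trans _ _ (2 `^ p * (2 * m `^ p))).
    by apply: ler_wpM2l; [exact: powR_ge0| lra].
  have -> : (4 : R) = 2 * 2 by lra.
  rewrite !powRM // ?mulr_ge0 //.
  rewrite mulrA; apply: ler_wpM2r; first exact: powR_ge0.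
  apply: ler_wpM2l; first exact: powR_ge0.
  by apply: (le1r_powR _ hp); rewrite ler1n.
apply: nrm_le_inf; first by rewrite mulr_ge0.
move=> i hi; apply: le_trans (h i hi) _.
have := le_trans (nrm_coord x le1oo hi) hxm.
have := le_trans (nrm_coord y le1oo hi) hym.
lra.
Qed.

Lemma sum_stab (F : nat -> R) d N : (forall i, (d <= i)%N -> F i = 0) ->
  (forall i, 0 <= F i) ->
  \sum_(i < N) F i <= \sum_(i < d) F i.
Proof.
move=> h0 hge; rewrite -!(big_mkord xpredT).
case: (leqP N d) => hN.
  by rewrite (big_cat_nat (leq0n N) hN) /= lerDl sumr_ge0.
rewrite (big_cat_nat (leq0n d) (ltnW hN)) /= [X in _ + X <= _]big_nat_cond [X in _ + X <= _]big1 ?addr0 //.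
by move=> i /andP[/andP[hi _] _]; apply: h0.
Qed.

Lemma lqE q d x : (1%:E <= q)%E -> (forall i, (d <= i)%N -> x i = 0) ->
  lq_norm q x = (nrm q d x)%:E.
Proof.
move=> hq h0; case: (ge1q hq) => [[p hp ->]|->] /=.
  have hp0 : 0 <= p by apply: le_trans hp.
  have hpi : 0 <= p^-1 by rewrite invr_ge0.
  apply/eqP; rewrite eq_le; apply/andP; split.
    apply: ge_ereal_sup => _ [N _ <-]; rewrite lee_fin.
    apply: powR_le => //; first by apply: sumr_ge0 => i _; exact: powR_ge0.
    apply: (sum_stab (F := fun i => `|x i| `^ p)); last by move=> i; exact: powR_ge0.
    by move=> i hi; rewrite h0 // normr0 powR0 // gt_eqF // (lt_le_trans ltr01 hp).
  by apply: ereal_sup_ubound; exists d.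
apply/eqP; rewrite eq_le; apply/andP; split.
  apply: ge_ereal_sup => _ [i _ <-]; rewrite lee_fin.
  case: (ltnP i d) => hi; first by apply: (nrm_coord x le1oo hi).
  by rewrite h0 // normr0 (nrm_ge0 +oo%E).
set S := ereal_sup _.
have hS : forall i, ((`|x i|)%:E <= S)%E by move=> i; apply: ereal_sup_ubound; exists i.
apply: (big_ind (fun v => (v%:E <= S)%E)).
- by have := hS d; rewrite h0 // normr0.
- move=> a b ha hb; rewrite /Num.max; case: ifP => //.
- by move=> i _; exact: hS.
Qed.

End Nrm.

Lemma card_cover (T : finType) (U : eqType) (S : {set T}) (s : seq U)
  (B : U -> {set T}) :
  (forall v, v \in S -> exists2 x, x \in s & v \in B x) ->
  (#|S| <= \sum_(x <- s) #|B x|)%N.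
Proof.
elim: s S => [|x s IH] S h.
  rewrite big_nil leqn0 cards_eq0; apply/eqP/setP => v; rewrite inE.
  by apply/negP => /h [y]; rewrite in_nil.
rewrite big_cons -(cardsID (B x) S); apply: leq_add.
  by apply: subset_leq_card; apply: subsetIr.
apply: IH => v; rewrite inE => /andP[hv hvS].
case: (h v hvS) => y; rewrite inE => /orP[/eqP ->|hy] hvy.
  by rewrite hvy in hv.
by exists y.
Qed.

Section Lattice.
Variable R : realType.
Variable q : \bar R.
Hypothesis hq : (1%:E <= q)%E.
Variable d : nat.
Variable del : R.
Hypothesis hdel : 0 < del.
Variable n : nat.

Definition ext (f : 'I_d -> R) : nat -> R :=
  fun i => oapp f 0 (insub i : option 'I_d).

Lemma ext_lt f i (hi : (i < d)%N) : ext f i = f (Ordinal hi).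
Proof. by rewrite /ext insubT. Qed.

Lemma ext_ge f i : (d <= i)%N -> ext f i = 0.
Proof. by move=> hi; rewrite /ext insubF // ltnNge hi. Qed.

Definition emb (v : {ffun 'I_d -> 'I_n.+1}) : nat -> R :=
  ext (fun j => del * (v j : nat)%:R).

Definition P (t : R) : {set {ffun 'I_d -> 'I_n.+1}} :=
  [set v | nrm q d (emb v) <= t].

Lemma emb_coord v (j : 'I_d) : emb v j = del * (v j : nat)%:R.
Proof. by rewrite /emb (ext_lt _ (ltn_ord j)); congr (_ * (v _ : nat)%:R); apply: val_inj. Qed.

Lemma P_coord t v (j : 'I_d) : v \in P t -> del * (v j : nat)%:R <= t.
Proof.
rewrite inE => hv; apply: le_trans hv.
have := nrm_coord (emb v) hq (ltn_ord j); rewrite emb_coord.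
by rewrite ger0_norm // mulr_ge0 // ltW.
Qed.

Lemma P0 t : 0 <= t -> [ffun => ord0] \in P t.
Proof.
move=> ht; rewrite inE; apply: le_trans ht.
have := @nrm_box _ q d (emb [ffun => ord0]) 0 hq (lexx 0).
rewrite mulr0; apply=> i hi; rewrite /emb (ext_lt _ hi) ffunE /= mulr0 normr0 //.
Qed.


Lemma divmod_uniq (k a b a' b' : nat) : (b < k)%N -> (b' < k)%N ->
  (a * k + b = a' * k + b')%N -> a = a' /\ b = b'.
Proof.
move=> hb hb' e; have hk : (0 < k)%N by apply: leq_ltn_trans hb.
have e1 := congr1 (fun m => m %/ k)%N e; rewrite /= !divnMDl // !divn_small // !addn0 in e1.
by split => //; move: e; rewrite e1 => /eqP; rewrite eqn_add2l => /eqP.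
Qed.

Lemma scale (k : nat) (t : R) : (0 < k)%N -> 0 <= t -> d%:R * del <= t ->
  k%:R * (t / del + 1) <= n%:R ->
  (#|P t| * k ^ d <= #|P (4 * (k%:R * t))|)%N.
Proof.
move=> hk ht hdt hn.
pose f := fun vw : {ffun 'I_d -> 'I_n.+1} * {ffun 'I_d -> 'I_k} =>
  [ffun j => inord (vw.1 j * k + vw.2 j) : 'I_n.+1].
have hb : forall v (w : {ffun 'I_d -> 'I_k}) j, v \in P t -> (v j * k + w j < n.+1)%N.
  move=> v w j hv; have := P_coord j hv => hvj.
  have hv' : ((v j : nat)%:R : R) <= t / del by rewrite ler_pdivlMr // mulrC.
  have hw : ((w j : nat)%:R : R) + 1 <= k%:R by rewrite natr1 ler_nat ltn_ord.
  rewrite -(ltr_nat R) natrD natrM.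
  have : ((v j : nat)%:R : R) * k%:R <= t / del * k%:R by apply: ler_wpM2r.
  move: hn; set X := t / del; rewrite mulrDr mulr1 -natr1 => hn hvk.
  have hkX : k%:R * X = X * k%:R by rewrite mulrC.
  lra.
have finj : {in finset.setX (P t) [set: {ffun 'I_d -> 'I_k}] &, injective f}.
  move=> [v w] [v' w']; rewrite !finset.in_setX !finset.in_setT /= !andbT => hv hv' /ffunP e.
  have key : forall j, v j = v' j /\ w j = w' j.
    move=> j; have := e j; rewrite !ffunE => /(congr1 val) /=.
    rewrite !inordK ?hb // => /(divmod_uniq (ltn_ord _) (ltn_ord _)) [e1 e2].
    by split; apply: val_inj.
  by congr pair; apply/ffunP => j; case: (key j).
have fsub : f @: finset.setX (P t) [set: {ffun 'I_d -> 'I_k}] \subset P (4 * (k%:R * t)).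
  apply/fintype.subsetP => yy /finset.imsetP[[v w]]; rewrite !finset.in_setX !finset.in_setT /= andbT => hv ->.
  have hv0 := hv; rewrite inE in hv0; rewrite inE.
  apply: le_trans (nrm_tri (x := fun i => k%:R * emb v i)
     (y := ext (fun j => del * (w j : nat)%:R)) hq _) _.
    move=> i hi; rewrite /emb !(ext_lt _ hi) ffunE /= inordK ?hb //.
    rewrite natrD natrM mulrDr; apply: le_trans (ler_normD _ _).
    by rewrite mulrA [k%:R * _]mulrC.
  apply: ler_wpM2l => //; rewrite ge_max; apply/andP; split.
    apply: le_trans (nrm_hom (x := emb v) hq (ler0n _ k) _) _.
      by move=> i hi; rewrite normrM normr_nat.
    exact: ler_wpM2l.
  apply: le_trans (nrm_box (del := del * k%:R) hq _ _) _.
  - by rewrite mulr_ge0 // ltW.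
  - move=> i hi; rewrite (ext_lt _ hi) normrM gtr0_norm // normr_nat.
    by apply: ler_wpM2l; [exact: ltW | rewrite ler_nat ltnW].
  by rewrite mulrA [k%:R * t]mulrC; apply: ler_wpM2r.
have := subset_leq_card fsub; rewrite (card_in_imset finj) cardsX cardsT card_ffun !card_ord //.
Qed.

Definition dist (a b : nat) : nat := if (b <= a)%N then (a - b)%N else (b - a)%N.

Lemma dist_real (a b : nat) : del * (dist a b)%:R = `|del * a%:R - del * b%:R|.
Proof.
rewrite -mulrBr normrM gtr0_norm //; congr (_ * _); rewrite /dist.
case: ifP => h.
  by rewrite natrB // ger0_norm // subr_ge0 ler_nat.
have hab : (a <= b)%N by rewrite ltnW // ltnNge h.
by rewrite distrC natrB // ger0_norm // subr_ge0 ler_nat.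
Qed.

Lemma fold (S : {set {ffun 'I_d -> 'I_n.+1}}) (x : nat -> R) (eps : R) :
  0 <= eps ->
  (#|[set v in S | (nrm q d (fun i => emb v i - x i) <= eps)%R]| <= #|P (4 * eps)| * 2 ^ d)%N.
Proof.
move=> he; set A := [set v in S | _].
have [->|/set0Pn[v0 hv0]] := eqVneq A finset.set0; first by rewrite cards0.
pose g := fun v : {ffun 'I_d -> 'I_n.+1} =>
  ([ffun j => inord (dist (v j) (v0 j)) : 'I_n.+1], [ffun j => (v0 j <= v j)%N]).
have hdist : forall (a b : 'I_n.+1), (dist a b < n.+1)%N.
  move=> a b; have := ltn_ord a; have := ltn_ord b; rewrite /dist; case: ifP => _; lia.
have ginj : {in A &, injective g}.
  move=> v v' _ _ [/ffunP e1 /ffunP e2]; apply/ffunP => j; apply: val_inj.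
  have := e1 j; have := e2 j; rewrite !ffunE => s12 /(congr1 val).
  rewrite /= !inordK ?hdist // /dist s12.
  case: (boolP (v0 j <= v' j)%N) => h1.
    rewrite h1 in s12 *; move=> h2; move/idP: s12 => s12; by rewrite -(subnK s12) h2 subnK.
  rewrite (negbTE h1) in s12 *; move=> h2; move/negbT: s12 => s12.
  rewrite -ltnNge in s12; rewrite -ltnNge in h1.
  by rewrite -(subKn (ltnW s12)) h2 subKn // ltnW.
have gsub : g @: A \subset finset.setX (P (4 * eps)) [set: {ffun 'I_d -> bool}].
  apply/fintype.subsetP => yy /finset.imsetP[v hv ->]; rewrite !inE andbT.
  move: hv0 hv; rewrite !inE => /andP[_ hv0] /andP[_ hv].
  apply: le_trans (nrm_tri (x := fun i => emb v i - x i)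
     (y := fun i => - (emb v0 i - x i)) hq _) _.
    move=> i hi; rewrite /emb !(ext_lt _ hi) ffunE /= inordK ?hdist //.
    rewrite dist_real normr_id.
    set a := del * (v _)%:R; set b := del * (v0 _)%:R.
    have -> : a - b = (a - x i) + (- (b - x i)) by rewrite opprB addrA subrK.
    exact: ler_normD.
  apply: ler_wpM2l => //; rewrite ge_max hv /=.
  apply: le_trans hv0; apply: nrm_mono => // i hi; by rewrite normrN.
rewrite -(card_in_imset ginj).
by rewrite (leq_trans (subset_leq_card gsub)) // cardsX cardsT card_ffun card_bool card_ord.
Qed.

End Lattice.

Lemma LB (R : realType) (q : \bar R) (d : nat) (r eps : R) (X : set (nat -> R)) :
  (1%:E <= q)%E -> 1 <= r -> 0 < eps -> 80 * eps <= 1 ->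
  covering q (ball_fin q d r) X eps ->
  d%:R * (log2 r + 1) <= log2 (#|` fset_set X|)%:R.
Proof.
move=> hq hr he he80 [finX XA cov].
set N := #|` fset_set X|.
pose k := (Num.truncn (4 * r)).+1.
have hk1 : 4 * r < k%:R := truncnS_gt _.
have hk2 : k%:R <= 4 * r + 1.
  rewrite /k -natr1 lerD2r truncn_le; lra.
pose del := 4 * eps / (d%:R + 1).
have hd1 : 0 < d%:R + 1 :> R by rewrite ltr_wpDl.
have hdel : 0 < del by rewrite /del divr_gt0 // mulr_gt0.
have hdd : d%:R * del <= 4 * eps.
  rewrite /del mulrA ler_pdivrMr // mulrC ler_wpM2l ?lerDl //; lra.
pose n := (Num.truncn (k%:R * (4 * eps / del + 1))).+1.
have hn : k%:R * (4 * eps / del + 1) <= n%:R by apply: ltW; exact: truncnS_gt.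
have h1 := scale hq hdel (ltn0Sn _) (ltW (mulr_gt0 (ltr0n _ 4) he)) hdd hn.
have h2 : P q d del n (4 * (k%:R * (4 * eps))) \subset P q d del n r.
  apply/fintype.subsetP => v; rewrite !inE => hv; apply: le_trans hv _.
  have : k%:R * eps <= (4 * r + 1) * eps by apply: ler_wpM2r => //; exact: ltW.
  have : 4 * r * eps <= 4 * r * (1 / 80) by apply: ler_wpM2l; lra.
  lra.
set c := #|P q d del n (4 * eps)|.
have h3 : (#|P q d del n r| <= N * (c * 2 ^ d))%N.
  apply: leq_trans (card_cover (s := fset_set X)
    (B := fun x => [set v in P q d del n r | (nrm q d (fun i => emb del v i - x i) <= eps)%R]) _) _.
    move=> v hv.
    have hsupp : forall i, (d <= i)%N -> emb del v i = 0 by move=> i hi; exact: ext_ge.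
    have hball : ball_fin q d r (emb del v).
      split; last exact: hsupp.
      by rewrite (lqE hq hsupp) lee_fin; rewrite inE in hv.
    have [x Xx hx] := cov _ hball.
    exists x; first by rewrite in_fset_set // inE.
    rewrite inE hv /=.
    have [_ xz] := XA _ Xx.
    move: hx; rewrite /lq_dist (@lqE _ _ d) // ?lee_fin //.
    by move=> i hi; change (emb del v i - x i = 0); rewrite hsupp // xz // subr0.
  rewrite /N card_fset_sum1 big_distrl /=; apply: leq_sum => x _; rewrite mul1n.
  exact: (fold hq hdel _ x (ltW he)).
have hc : (0 < c)%N.
  rewrite card_gt0; apply/set0Pn; exists [ffun => ord0]; apply: P0 => //.
  by rewrite mulr_ge0 // ltW.
have hkN : (k ^ d <= N * 2 ^ d)%N.
  have := leq_trans h1 (leq_trans (subset_leq_card h2) h3).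
  by rewrite mulnCA leq_pmul2l.
have hkNr : (k%:R ^+ d : R) <= N%:R * 2 ^+ d.
  by rewrite -natrX -natrX -natrM ler_nat.
have h2r : (2 * r) ^+ d <= N%:R.
  have h4r : (4 * r) ^+ d <= k%:R ^+ d.
    by apply: lerXn2r; rewrite ?nnegrE //; lra.
  have e4 : (4 * r) ^+ d = (2 * r) ^+ d * 2 ^+ d.
    by rewrite -exprMn; congr (_ ^+ _); lra.
  rewrite -(@ler_pM2r _ (2 ^+ d)) ?exprn_gt0 //.
  by rewrite -e4; apply: le_trans hkNr.
have h2r0 : 0 < (2 * r) ^+ d by rewrite exprn_gt0 //; lra.
have hl2 : 0 < ln (2 : R) by apply: ln_gt0; lra.
rewrite /log2 ler_pdivlMr // -mulrA mulrDl mul1r divfK ?gt_eqF //.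
apply: le_trans (_ : ln ((2 * r) ^+ d) <= _).
  rewrite lnXn; last lra.
  rewrite lnM ?posrE; [by rewrite mulr_natl addrC|lra|lra].
by rewrite ler_ln ?posrE //; apply: lt_le_trans h2r.
Qed.

Local Open Scope classical_set_scope.

Lemma card_seq_le (R : realType) (s : seq (nat -> R)) :
  (#|` fset_set [set` s]| <= size s)%N.
Proof.
have -> : [set` s] = [set` [fset x in s]%fset].
  by apply/funext => x /=; rewrite inE.
by rewrite set_fsetK card_fseq size_undup.
Qed.

Lemma log2_card_le (R : realType) (N B' d : nat) (B : R) :
  (0 < B')%N -> (N <= B' ^ d)%N -> 1 <= B -> B'%:R <= B -> log2 (N%:R : R) <= d%:R * log2 B.
Proof.
move=> hB'0 hN hB hB'.
have hl2 : 0 < ln (2 : R) by apply: ln_gt0; lra.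
case: N hN => [|N] hN.
  rewrite /log2 ln0 // mul0r; apply: mulr_ge0 => //; apply: divr_ge0; [exact: ln_ge0 | exact: ltW].
rewrite /log2 mulrA ler_pM2r ?invr_gt0 //.
apply: (@le_trans _ _ (ln ((B'%:R : R) ^+ d))).
  by rewrite ler_ln ?posrE ?ltr0n ?exprn_gt0 ?ltr0n // -natrX ler_nat.
rewrite lnXn ?ltr0n // -[_ *+ d]mulr_natl; apply: ler_wpM2l => //.
by rewrite ler_ln ?posrE ?ltr0n //; lra.
Qed.

Lemma UB (R : realType) (q : \bar R) (d : nat) (r eps : R) :
  (1%:E <= q)%E -> 1 <= r -> 0 < eps -> eps <= 1 ->
  exists X, covering q (ball_fin q d r) X eps /\
    log2 (#|` fset_set X|)%:R <= d%:R * log2 (4 * r * (d%:R + 1) / eps).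
Proof.
move=> hq hr he he1.
pose del := eps / (d%:R + 1).
have hd1 : 0 < d%:R + 1 :> R by rewrite ltr_wpDl.
have hdel : 0 < del by rewrite /del divr_gt0.
have hdd : d%:R * del <= eps.
  rewrite /del mulrA ler_pdivrMr // mulrC ler_wpM2l ?lerDl //; lra.
pose K := Num.truncn (r / del).
pose embU := fun w : {ffun 'I_d -> bool * 'I_K.+1} =>
  ext (fun j => (if (w j).1 then -1 else 1) * (del * ((w j).2 : nat)%:R)).
pose s := [seq embU w | w <- enum {ffun 'I_d -> bool * 'I_K.+1} & `[< ball_fin q d r (embU w) >]].
exists [set` s]; split; first split.
- exact: finite_seq.
- move=> y /= /mapP[w]; rewrite mem_filter => /andP[/asboolP h _] ->; exact: h.
- move=> a [ha az].
  have hna : nrm q d a <= r by move: ha; rewrite (lqE hq az) lee_fin.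
  pose t := fun i => Num.truncn (`|a i| / del).
  pose w := [ffun j : 'I_d => ((a j < 0)%R, inord (t j) : 'I_K.+1)].
  have htK : forall i, (i < d)%N -> (t i < K.+1)%N.
    move=> i hi; rewrite ltnS; apply: le_truncn; rewrite ler_pM2r ?invr_gt0 //.
    exact: le_trans (nrm_coord a hq hi) hna.
  have hy : forall i (hi : (i < d)%N), embU w i =
      (if (a i < 0)%R then -1 else 1) * (del * (t i)%:R).
    by move=> i hi; rewrite /embU (ext_lt _ hi) ffunE /= inordK ?htK.
  have ht1 : forall i, del * (t i)%:R <= `|a i|.
    move=> i; rewrite mulrC -ler_pdivlMr //; by rewrite /t truncn_le divr_ge0 // ltW.
  have ht2 : forall i, `|a i| < del * (t i)%:R + del.
    move=> i; have := truncnS_gt (`|a i| / del); rewrite -/(t i) ltr_pdivrMr //.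
    by rewrite -natr1 mulrDl mul1r mulrC.
  have hsupp : forall i, (d <= i)%N -> embU w i = 0 by move=> i hi; exact: ext_ge.
  have hmono : forall i, (i < d)%N -> `|embU w i| <= `|a i|.
    move=> i hi; rewrite (hy i hi) normrM; case: ifP => _;
      rewrite ?normrN normr1 mul1r ger0_norm ?ht1 // mulr_ge0 // ltW //.
  exists (embU w).
    apply/mapP; exists w => //; rewrite mem_filter mem_enum andbT; apply/asboolP.
    split => //; rewrite (lqE hq hsupp) lee_fin.
    by apply: le_trans hna; apply: nrm_mono.
  rewrite /lq_dist (@lqE _ _ d) // ?lee_fin.
    apply: le_trans hdd; apply: nrm_box => //; first exact: ltW.
    move=> i hi; change (`|a i - embU w i| <= del); rewrite (hy i hi).
    have h1 := ht1 i; have h2 := ht2 i.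
    case: ifP => ha0.
      rewrite mulN1r opprK ler_norml; rewrite ltr0_norm // in h1 h2; lra.
    rewrite mul1r ler_norml; rewrite ger0_norm ?leNgt ?ha0 // in h1 h2; lra.
  by move=> i hi; change (a i - embU w i = 0); rewrite az // hsupp // subr0.
have hrd : 1 <= r / del.
  rewrite /del invf_div mulrA ler_pdivlMr // mul1r.
  apply: (@le_trans _ _ (1 * 1)); first lra.
  by apply: ler_pM => //; rewrite lerDr.
have hK : (K%:R : R) <= r / del by rewrite /K truncn_le; lra.
have hB : (4 * r * (d%:R + 1) / eps) = 4 * (r / del).
  by rewrite /del invf_div !mulrA.
apply: (@log2_card_le R _ (2 * K.+1)%N d _ _ (leq_trans (card_seq_le s) _)).
- by rewrite muln_gt0.
- rewrite size_map size_filter; apply: leq_trans (count_size _ _) _.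
  by rewrite -cardT card_ffun card_prod card_bool !card_ord.
- rewrite hB; lra.
- rewrite hB natrM -natr1; lra.
Qed.

Lemma arith (R : realType) (C Q P L A K g e dd lr ld : R) :
  0 <= dd -> 0 <= lr -> 1 <= Q -> 1 <= P -> 0 <= C -> 0 <= K -> 0 <= g ->
  0 <= e -> 0 <= ld -> 0 <= A -> 0 <= L ->
  dd * (lr + 1) <= C * Q -> L <= K * P -> ld <= A + (1 + e) * L ->
  dd * (2 + lr + ld + g * L) <= C * (3 + A + (1 + e) * K + g * K) * (Q * P).
Proof.
move=> hdd hlr hQ hP hC hK hg he hld hA hL h1 h2 h3.
have hd : dd <= C * Q by nra.
have hdlr : dd * lr <= C * Q - dd by nra.
have h3' : ld <= A + (1 + e) * (K * P) by nra.
have h4 : dd * ld <= C * Q * (A + (1 + e) * (K * P)).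
  apply: (@le_trans _ _ (C * Q * ld)); first by apply: ler_wpM2r.
  apply: ler_wpM2l => //; nra.
have h5 : dd * L <= C * Q * (K * P).
  apply: (@le_trans _ _ (C * Q * L)); first by apply: ler_wpM2r.
  by apply: ler_wpM2l => //; nra.
have hCQ : 0 <= C * Q by nra.
have h6 : C * Q * (3 + A) <= C * Q * (3 + A) * P.
  rewrite -{1}(mulr1 (C * Q * (3 + A))); apply: ler_wpM2l => //; nra.
have e1 : dd * (2 + lr + ld + g * L) = 2 * dd + dd * lr + dd * ld + g * (dd * L).
  by ring.
have e2 : C * (3 + A + (1 + e) * K + g * K) * (Q * P) =
  C * Q * (3 + A) * P + (1 + e) * (C * Q * (K * P)) + g * (C * Q * (K * P)).
  by rewrite !mulrDr !mulrDl; ring.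
rewrite e1 e2.
have : g * (dd * L) <= g * (C * Q * (K * P)) by apply: ler_wpM2l.
have : C * Q * (A + (1 + e) * (K * P)) = C * Q * A + (1 + e) * (C * Q * (K * P)) by ring.
nra.
Qed.

Section Logs.
Variable R : realType.

Lemma ln2_gt0 : 0 < ln (2 : R).
Proof. by apply: ln_gt0; lra. Qed.

Lemma log2M (x y : R) : 0 < x -> 0 < y -> log2 (x * y) = log2 x + log2 y.
Proof. by move=> hx hy; rewrite /log2 lnM ?posrE // mulrDl. Qed.

Lemma log2_pow (x a : R) : 0 < x -> log2 (x `^ a) = a * log2 x.
Proof. by move=> hx; rewrite /log2 ln_powR mulrA. Qed.

Lemma log2_4 : log2 (4 : R) = 2.
Proof.
rewrite /log2 (_ : (4 : R) = 2 ^+ 2); last by rewrite expr2; lra.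
by rewrite lnXn; [rewrite -[_ *+ 2]mulr_natl mulfK // gt_eqF // ln2_gt0 | lra].
Qed.

Lemma log2_ge0 (x : R) : 1 <= x -> 0 <= log2 x.
Proof. by move=> hx; apply: divr_ge0; [exact: ln_ge0 | exact: ltW ln2_gt0]. Qed.

Lemma log2_le (x y : R) : 0 < x -> x <= y -> log2 x <= log2 y.
Proof.
move=> hx hxy; rewrite /log2 ler_pM2r ?invr_gt0 ?ln2_gt0 //.
by rewrite ler_ln ?posrE //; apply: lt_le_trans hxy.
Qed.

Lemma expand (d : nat) (r : R) (M : nat) (g : R) : 1 <= r -> (1 <= M)%N ->
  log2 (4 * r * (d%:R + 1) / (1 * M%:R `^ (- g))) =
  2 + log2 r + log2 (d%:R + 1) + g * log2 M%:R.
Proof.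
move=> hr hM; have hM0 : (0 : R) < M%:R by rewrite ltr0n.
have hd1 : 0 < d%:R + 1 :> R by rewrite ltr_wpDl.
rewrite mul1r powRN invrK !log2M ?log2_4 ?log2_pow //;
  [lra|lra|rewrite mulr_gt0 //; lra|exact: powR_gt0].
Qed.

Lemma log_le_pow (M h : R) : 0 < h -> 1 <= M ->
  log2 M <= (2 / (h * ln 2)) * M `^ (h / 2).
Proof.
move=> hh hM; set P := M `^ (h / 2).
have hP0 : 0 < P by apply: powR_gt0; lra.
have hlnP : ln P <= P.
  have hl := @le_ln1Dx R (P - 1) ltac:(lra).
  rewrite addrC subrK in hl; lra.
have hh0 : h != 0 by rewrite gt_eqF.
have hl0 : ln (2 : R) != 0 by rewrite gt_eqF // ln2_gt0.
have e : ln M = (2 / h) * ln P.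
  by rewrite /P ln_powR; field.
have h1 : (2 / h) * ln P <= (2 / h) * P.
  by apply: ler_wpM2l => //; rewrite divr_ge0 // ltW.
have e2 : (2 / (h * ln 2)) * P = ((2 / h) * P) / ln 2 by field; rewrite hl0 hh0.
rewrite /log2 e e2 ler_pM2r ?invr_gt0 ?ln2_gt0 //.
Qed.

End Logs.

Lemma asym (R : realType) (d : nat -> nat) (r : nat -> R) (g h : R) :
  0 < g -> 0 < h -> (forall M, 1 <= r M) ->
  (exists (C : R) (M0 : nat), forall M : nat, (M0 <= M)%N ->
     (d M)%:R * (log2 (r M) + 1) <= C * M%:R `^ (1 + h / 2)) ->
  exists c2 : R, 0 < c2 /\ forall M : nat, (1 <= M)%N ->
    (d M)%:R * log2 (4 * r M * ((d M)%:R + 1) / (1 * M%:R `^ (- g)))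
      <= c2 * M%:R `^ (1 + h).
Proof.
move=> hg hh hr [C [M0 hC]].
pose B := fun M : nat => (d M)%:R * log2 (4 * r M * ((d M)%:R + 1) / (1 * M%:R `^ (- g))).
pose M1 := maxn M0 1.
have hpow1 : forall (M : nat) (a : R), (1 <= M)%N -> 0 <= a -> 1 <= M%:R `^ a.
  move=> M a hM ha; rewrite -[X in X <= _](powRr0 M%:R); apply: (ler_powR _ ha).
  by rewrite ler1n.
have hC0 : 0 <= C.
  have := hC M1 (leq_maxl _ _).
  have : 1 <= (M1%:R : R) `^ (1 + h / 2) by apply: hpow1; [exact: leq_maxr | lra].
  have : 0 <= (d M1)%:R * (log2 (r M1) + 1).
    by apply: mulr_ge0 => //; have := log2_ge0 (hr M1); lra.
  nra.
pose K := 2 / (h * ln (2 : R)).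
have hK : 0 <= K by rewrite divr_ge0 // mulr_ge0 // ltW // ln2_gt0.
pose A := log2 (C + 1).
have hA : 0 <= A by apply: log2_ge0; lra.
pose c' := C * (3 + A + (1 + h / 2) * K + g * K).
have hc' : 0 <= c'.
  apply: mulr_ge0 => //; have : 0 <= (1 + h / 2) * K by apply: mulr_ge0 => //; lra.
  have : 0 <= g * K by apply: mulr_ge0 => //; lra.
  lra.
have big : forall M, (M1 <= M)%N -> B M <= c' * M%:R `^ (1 + h).
  move=> M hM.
  have hM0 : (M0 <= M)%N := leq_trans (leq_maxl _ _) hM.
  have hM1 : (1 <= M)%N := leq_trans (leq_maxr _ _) hM.
  have hMr : (1 : R) <= M%:R by rewrite ler1n.
  have hMp : (0 : R) < M%:R by lra.
  set Q := M%:R `^ (1 + h / 2); set P := M%:R `^ (h / 2).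
  have hQ : 1 <= Q by apply: hpow1 => //; lra.
  have hP : 1 <= P by apply: hpow1 => //; lra.
  have eQP : M%:R `^ (1 + h) = Q * P.
    rewrite /Q /P -powRD; first by congr (_ `^ _); lra.
    by apply/implyP => _; rewrite gt_eqF.
  rewrite /B expand // eQP.
  have hlr := log2_ge0 (hr M).
  have hL := log2_ge0 hMr.
  have hCM := hC M hM0.
  apply: arith => //; try lra.
  - by apply: log2_ge0; rewrite lerDr.
  - exact: log_le_pow.
  - have hdQ : (d M)%:R <= C * Q.
      apply: le_trans hCM; rewrite -{1}(mulr1 (d M)%:R); apply: ler_wpM2l => //; lra.
    have hdle : (d M)%:R + 1 <= (C + 1) * Q by nra.
    apply: (@le_trans _ _ (log2 ((C + 1) * Q))).
      by apply: log2_le => //; lra.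
    rewrite log2M ?log2_pow //; lra.
pose c2 := c' + \sum_(i < M1) `|B i| + 1.
have hS : 0 <= \sum_(i < M1) `|B i| by apply: sumr_ge0 => i _.
exists c2; split; first by rewrite /c2; lra.
move=> M hM; have hX := hpow1 M (1 + h) hM ltac:(lra).
case: (leqP M1 M) => hMM.
  apply: le_trans (big M hMM) _; apply: ler_wpM2r; first lra.
  rewrite /c2; lra.
have hBM : B M <= \sum_(i < M1) `|B i|.
  rewrite (bigD1 (Ordinal hMM)) //=; apply: le_trans (ler_norm _) _.
  by rewrite lerDl; apply: sumr_ge0.
have : B M <= c2 by rewrite /c2; lra.
move=> h1; apply: le_trans h1 _.
rewrite -{1}(mulr1 c2); apply: ler_wpM2l => //; rewrite /c2; lra.
Qed.

Lemma LBdir (R : realType) (q : \bar R) (d : nat -> nat) (r : nat -> R) (g : R) :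
  (1%:E <= q)%E -> (forall M, 1 <= r M) -> 0 < g ->
  gamma_encodable q (fun M => ball_fin q (d M) (r M)) g ->
  forall h : R, 0 < h ->
       exists (C : R) (M0 : nat), forall M : nat, (M0 <= M)%N ->
         (d M)%:R * (log2 (r M) + 1) <= C * M%:R `^ (1 + h).
Proof.
move=> hq hr hg he h hh.
have [c1 [c2 [hc1 [hc2 [Enc hEnc]]]]] := he h hh.
pose M0 := (Num.truncn ((80 * c1) `^ g^-1)).+1.
exists c2, M0 => M hM.
have hM1 : (1 <= M)%N by apply: leq_trans hM.
have [hcov hlog] := hEnc M hM1.
apply: le_trans hlog.
have hMp : (0 : R) < M%:R by rewrite ltr0n.
have hMg : 0 < M%:R `^ g by apply: powR_gt0.
apply: (LB hq (hr M) _ _ hcov).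
  by rewrite mulr_gt0 // powR_gt0.
have hbase : (80 * c1) `^ g^-1 <= M%:R.
  apply: ltW; apply: lt_le_trans (truncnS_gt _) _; by rewrite ler_nat.
have h80 : 80 * c1 <= M%:R `^ g.
  have -> : 80 * c1 = ((80 * c1) `^ g^-1) `^ g.
    by rewrite -powRrM mulVf ?gt_eqF // powRr1 // mulr_ge0 // ltW.
  by apply: powR_le; [exact: ltW | exact: powR_ge0 | exact: hbase].
rewrite powRN mulrA ler_pdivrMr // mul1r //.
Qed.

Lemma UBdir (R : realType) (q : \bar R) (d : nat -> nat) (r : nat -> R) :
  (1%:E <= q)%E -> (forall M, 1 <= r M) ->
  (forall h : R, 0 < h ->
       exists (C : R) (M0 : nat), forall M : nat, (M0 <= M)%N ->
         (d M)%:R * (log2 (r M) + 1) <= C * M%:R `^ (1 + h)) ->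
  infty_encodable q (fun M => ball_fin q (d M) (r M)).
Proof.
move=> hq hr hC g hg h hh.
have hh2 : 0 < h / 2 by rewrite divr_gt0.
have [c2 [hc2 hB]] := asym hg hh hr (hC (h / 2) hh2).
exists 1, c2; split; first exact: ltr01.
split => //.
have : forall M : nat, exists X : set (nat -> R), (1 <= M)%N ->
    covering q (ball_fin q (d M) (r M)) X (1 * M%:R `^ (- g)) /\
    log2 (#|` fset_set X|)%:R <= c2 * M%:R `^ (1 + h).
  move=> M; case: (leqP 1 M) => hM; last by exists set0 => h1; exfalso; lia.
  have hMp : (0 : R) < M%:R by rewrite ltr0n.
  have hMg : 0 < M%:R `^ g by apply: powR_gt0.
  have hMg1 : 1 <= M%:R `^ g.
    rewrite -[X in X <= _](powRr0 M%:R); apply: (ler_powR _ (ltW hg)).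
    by rewrite ler1n.
  have he : 0 < 1 * M%:R `^ (- g) by rewrite mul1r powRN invr_gt0.
  have he1 : 1 * M%:R `^ (- g) <= 1 by rewrite mul1r powRN invf_le1.
  have [X [hX hl]] := @UB R q (d M) (r M) _ hq (hr M) he he1.
  exists X => _; split => //; apply: le_trans hl (hB M hM).
move/choice => [Enc hEnc]; exists Enc => M hM; exact: hEnc M hM.
Qed.

End Aux.

Local Open Scope classical_set_scope.
Local Open Scope ring_scope.

Theorem mainTheorem12 (R : realType) (q : \bar R) (d : nat -> nat) (r : nat -> R) :
  (1%:E <= q)%E ->
  (forall M, 1 <= r M) ->
  let Sigma := fun M => ball_fin q (d M) (r M) in
  (infty_encodable q Sigma \/ forall gamma : R, 0 < gamma -> ~ gamma_encodable q Sigma gamma)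
  /\
  (infty_encodable q Sigma <->
     forall h : R, 0 < h ->
       exists (C : R) (M0 : nat), forall M : nat, (M0 <= M)%N ->
         (d M)%:R * (log2 (r M) + 1) <= C * M%:R `^ (1 + h)).
Proof.
move=> hq hr Sigma.
split.
  case: (pselect (exists g : R, 0 < g /\ gamma_encodable q Sigma g)) => [[g [hg he]]|hn].
    by left; apply: Aux.UBdir => //; exact: (Aux.LBdir hq hr hg he).
  by right => g hg he; apply: hn; exists g.
split; last exact: Aux.UBdir.
move=> hinf; exact: (Aux.LBdir hq hr ltr01 (hinf 1 ltr01)).
Qed.
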